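(* Let $k\ge1$ be an integer and let $G$ be a random threshold graph on $n\ge1$ vertices. Let $|k\text{-core}(G)|$ denote the number of vertices of the $k$-core of $G$. Then $$P(|k\text{-core}(G)|=0)=\sum_{i=0}^{k-1}\left(\tfrac12\right)^{n-1}\binom{n-1}{i},$$ and for every integer $j$ with $k+1\le j\le n$, $$P(|k\text{-core}(G)|=j)=\left(\tfrac12\right)^{n+k-j}\binom{n+k-j-1}{k-1}.$$
   Context: A threshold graph on $n\ge1$ vertices is built from a base vertex $v_0$ by successively adding $v_1,\dots,v_{n-1}$, each either isolated (adjacent to no earlier vertex) or dominating (adjacent to all earlier vertices); its creation sequence $\mathrm{seq}(G)=s_1\cdots s_{n-1}$ has $s_i=1$ if $v_i$ is dominating and $s_i=0$ otherwise, and each unlabeled threshold graph on $n$ vertices corresponds to exactly one binary string of length $n-1$. A random threshold graph on $n$ vertices is one whose creation sequence is uniformly distributed over all $2^{n-1}$ binary strings of length $n-1$. The $k$-core of a graph is its maximum induced subgraph in which every vertex has degree at least $k$ (possibly empty). *)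

(* Defs.v *)
From mathcomp Require Import all_boot all_order all_algebra.
Set Implicit Arguments. Unset Strict Implicit. Unset Printing Implicit Defensive.
Import GRing.Theory Num.Theory.

(* A creation sequence for a threshold graph on n vertices v_0,...,v_(n-1)
   is a binary string s_1 ... s_(n-1), represented as an (n.-1)-tuple bool
   whose entry at position (i-1) is s_i. *)
Definition creation_seq (n : nat) := (n.-1).-tuple bool.

(* Adjacency of the threshold graph with creation sequence s, vertices 'I_n:
   for i < j, v_i ~ v_j iff v_j is dominating, i.e. s_j = 1. *)
Definition tadj (n : nat) (s : creation_seq n) (u v : 'I_n) : bool :=
  (u != v) && nth false s (maxn u v).-1.

Definition deg_in (n : nat) (s : creation_seq n) (S : {set 'I_n}) (v : 'I_n) : nat :=
  #|[set u in S | tadj s v u]|.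

Definition min_deg_ge (n k : nat) (s : creation_seq n) (S : {set 'I_n}) : bool :=
  [forall v in S, k <= deg_in s S v].

Definition kcore (n k : nat) (s : creation_seq n) : {set 'I_n} :=
  \bigcup_(S : {set 'I_n} | min_deg_ge k s S) S.

Definition prob_kcore_size (n k j : nat) : rat :=
  (#|[set s : creation_seq n | #|kcore k s| == j]|)%:R / (2 ^ n.-1)%:R.

(* Main.v *)
Require Import Defs.
From mathcomp Require Import all_boot all_order all_algebra.
From mathcomp Require Import zify ring.
Set Implicit Arguments. Unset Strict Implicit. Unset Printing Implicit Defensive.
Lemma card_ord_pred N (P : pred nat) : #|[set v : 'I_N | P v]| = count P (iota 0 N).
Proof.
by rewrite cardsE cardE /enum_mem size_filter -val_enum_ord count_map -enumT.
Qed.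

Lemma count_iotaS (P : pred nat) i n :
  count P (iota i.+1 n) = count (fun w => P w.+1) (iota i n).
Proof. by elim: n i => [|n IH] i //=; rewrite IH. Qed.

Lemma count_drop_iota (t : seq bool) x :
  count (fun w => (x <= w) && nth false t w) (iota 0 (size t)) = count id (drop x t).
Proof.
elim: t x => [|b t IH] x /=; first by case: x.
rewrite count_iotaS; case: x => [|x].
  rewrite drop0 /=; have := IH 0; rewrite drop0 => <-; congr (_ + _).
rewrite /= -IH; by apply: eq_count => w.
Qed.

Lemma count_drop_le (t : seq bool) a b : b <= a -> count id (drop a t) <= count id (drop b t).
Proof.
move=> ba; rewrite -(cat_take_drop (a - b) (drop b t)) drop_drop subnK // count_cat.
exact: leq_addl.
Qed.

Section F.
Variable k : nat.
Definition term (l : seq bool) (v : nat) : bool :=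
  (k <= count id (drop v.-1 l)) || (nth false l v.-1 && (k <= count id l)).
Definition F (l : seq bool) : nat := count (term l) (iota 0 (size l).+1).

Lemma F_rec b t : 0 < k ->
  F (b :: t) = if k <= count id t then (F t).+1
               else if b && (count id t == k.-1) then k.+1 else 0.
Proof.
move=> k0; rewrite /F /= count_iotaS /= count_iotaS.
set c := count id t.
rewrite count_iotaS.
have term0 : term (b :: t) 0 = (k <= b + c) by rewrite /term /=; case: (k <= _); rewrite /= ?andbF.
have term1 : term (b :: t) 1 = (k <= b + c) by rewrite /term /=; case: (k <= _); rewrite /= ?andbF.
rewrite term0 term1.
have -> : count (fun w => term (b :: t) w.+2) (iota 0 (size t)) =
          count (fun w => (k <= count id (drop w t)) || (nth false t w && (k <= b + c)))
            (iota 0 (size t)) by apply: eq_count => w.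
have -> : count (fun w => term t w.+1) (iota 0 (size t)) =
          count (fun w => (k <= count id (drop w t)) || (nth false t w && (k <= c)))
            (iota 0 (size t)) by apply: eq_count => w.
have -> : term t 0 = (k <= c) by rewrite /term /= drop0; case: (k <= c); rewrite /= ?andbF.
case: (leqP k c) => kc.
  have -> : k <= b + c by apply: leq_trans kc (leq_addl _ _).
  rewrite /=; congr (_.+1); by [].
have cd : forall w, (k <= count id (drop w t)) = false.
  move=> w; apply/negbTE; rewrite -ltnNge; apply: leq_ltn_trans kc.
  have := count_drop_le t (leq0n w); by rewrite drop0.
rewrite (eq_count (a2 := fun w => nth false t w && (k <= b + c))); last by move=> w; rewrite cd.
clear term0 term1.
have Hbc : (k <= b + c) = b && (c == k.-1).
  case: b => /=; last by rewrite add0n leqNgt kc.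
  apply/idP/eqP => [h|->]; last by rewrite add1n prednK.
  lia.
rewrite Hbc; case: ifP => [/andP [_ /eqP Hc]|_] /=; last first.
  by rewrite (eq_count (a2 := pred0)) ?count_pred0 // => w; rewrite andbF.
rewrite (eq_count (a2 := fun w => (0 <= w) && nth false t w)); last by move=> w; rewrite andbT.
rewrite count_drop_iota drop0 -/c Hc; lia.
Qed.

Hypothesis k0 : 0 < k.

Lemma F_nil : F [::] = 0.
Proof. by rewrite /F /term /=; case: k k0. Qed.

Lemma F_small l : count id l < k -> F l = 0.
Proof.
elim: l => [|b t IH] /=; first by rewrite F_nil.
move=> h; rewrite F_rec //.
have h1 : count id t < k by apply: leq_ltn_trans h; apply: leq_addl.
rewrite leqNgt h1 /=.
case: b h => //= h; case: eqP => // e; lia.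
Qed.

Lemma F_big l : k <= count id l -> k < F l.
Proof.
elim: l => [|b t IH] /=; first by rewrite leqNgt k0.
move=> h; rewrite F_rec //.
case: (leqP k (count id t)) => h1; first exact: (ltn_trans (IH h1) (ltnSn _)).
case: b h => /= h; last lia.
have -> : count id t == k.-1 by apply/eqP; lia.
by [].
Qed.

Lemma F_eq0 l : (F l == 0) = (count id l < k).
Proof.
case: (ltnP (count id l) k) => h; first by rewrite F_small.
by have := F_big h; case: (F l).
Qed.

End F.

Fixpoint bs (m : nat) : seq (seq bool) :=
  if m is m'.+1 then [seq true :: t | t <- bs m'] ++ [seq false :: t | t <- bs m']
  else [:: [::]].

Lemma mem_bs m l : (l \in bs m) = (size l == m).
Proof.
elim: m l => [|m IH] [|b l] //=.
  rewrite mem_cat; apply/negbTE; apply/norP; split; apply/mapP => -[x _ //].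
have inj : forall c : bool, injective (cons c) by move=> c x y [].
rewrite mem_cat eqSS -IH; case: b.
  rewrite (mem_map (inj true)); apply/orb_idr => /mapP [x _ //].
rewrite (mem_map (inj false)); apply/orb_idl => /mapP [x _ //].
Qed.

Lemma uniq_bs m : uniq (bs m).
Proof.
have inj : forall c : bool, injective (cons c) by move=> c x y [].
elim: m => [|m IH] //=.
rewrite cat_uniq !(map_inj_uniq (inj _)) IH /= andbT.
apply/hasPn => x /mapP [y _ ->]; apply/mapP => -[z _ //].
Qed.

Lemma card_tuple_count m (P : pred (seq bool)) :
  #|[set t : m.-tuple bool | P t]| = count P (bs m).
Proof.
rewrite cardsE cardE /enum_mem size_filter -enumT.
rewrite -(count_map val P).
apply/permP; apply: uniq_perm.
- by rewrite (map_inj_uniq val_inj) enum_uniq.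
- exact: uniq_bs.
move=> l; rewrite mem_bs; apply/mapP/idP => [[t _ ->]|/eqP h]; first by rewrite size_tuple.
by exists (Tuple (introT eqP h)); rewrite ?mem_enum.
Qed.

Lemma count_bs_cons m (P : pred (seq bool)) :
  count P (bs m.+1) = count (fun t => P (true :: t)) (bs m) + count (fun t => P (false :: t)) (bs m).
Proof. by rewrite /= count_cat !count_map. Qed.

Lemma C1 m i : count (fun l => count id l == i) (bs m) = 'C(m, i).
Proof.
elim: m i => [|m IH] i; first by case: i.
rewrite count_bs_cons /=.
case: i => [|i].
  rewrite (eq_count (a2 := pred0)) ?count_pred0 //= add0n.
  by rewrite (eq_count (a2 := fun t => count id t == 0)) // IH !bin0.
rewrite binS addnC -!IH; congr addn; apply: eq_count => t; by rewrite ?add0n ?add1n.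
Qed.

Lemma count_lt_sum (T : Type) (f : T -> nat) (s : seq T) k :
  count (fun x => f x < k) s = \sum_(0 <= i < k) count (fun x => f x == i) s.
Proof.
elim: k => [|k IH]; first by rewrite big_geq // (eq_count (a2 := pred0)) ?count_pred0.
rewrite big_nat_recr //= -IH.
elim: s {IH} => //= x s ->.
rewrite ltnS leq_eqVlt; case: ltngtP => _ /=; lia.
Qed.

Lemma Czero k m : 0 < k ->
  count (fun l => F k l == 0) (bs m) = \sum_(0 <= i < k) 'C(m, i).
Proof.
move=> k0; rewrite (eq_count (a2 := fun l => count id l < k)); last by move=> l; rewrite F_eq0.
rewrite count_lt_sum; apply: eq_bigr => i _; exact: C1.
Qed.

Lemma Cj k m d : 0 < k -> k + d <= m ->
  count (fun l => F k l == (k + d).+1) (bs m) = 2 ^ d * 'C((m - d).-1, k.-1).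
Proof.
move=> k0; elim: m d => [|m IH] d; first by rewrite leqNgt addn_gt0 k0.
move=> h; rewrite count_bs_cons.
case: d h => [|d] h.
  rewrite addn0 subn0 /= mul1n.
  rewrite (eq_count (a1 := fun t => F k (true :: t) == k.+1) (a2 := fun t => count id t == k.-1)).
    rewrite (eq_count (a1 := fun t => F k (false :: t) == k.+1) (a2 := pred0)).
      by rewrite count_pred0 addn0 C1.
    move=> t /=; rewrite F_rec //=; case: leqP => h1 //.
    have := F_big k0 h1; lia.
  move=> t /=; rewrite F_rec //=; case: leqP => h1.
    have := F_big k0 h1 => h2; apply/idP/idP => /eqP H; lia.
  by case: (count id t == k.-1); rewrite ?eqxx.
have E : forall b, count (fun t => F k (b :: t) == (k + d.+1).+1) (bs m) =
                   count (fun t => F k t == (k + d).+1) (bs m).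
  move=> b; apply: eq_count => t /=; rewrite F_rec //; case: leqP => h1.
    by rewrite addnS eqSS.
  rewrite F_small //; case: ifP => _; case: eqP => H1; case: eqP => H2 //; exfalso; lia.
rewrite !E IH; last by rewrite addnS in h.
by rewrite subSS expnS mul2n -addnn mulnDl.
Qed.

Section Graph.
Variables (m k : nat) (s : creation_seq m.+1).

Local Notation bit v := (nth false s (v : nat).-1).

Lemma size_s : size s = m. Proof. exact: size_tuple. Qed.

Lemma L1 (x : nat) : #|[set u : 'I_m.+1 | (x < u) && bit u]| = count id (drop x s).
Proof.
rewrite (card_ord_pred _ (fun u => (x < u) && bit u)) /= count_iotaS -(count_drop_iota s x) size_s.
by rewrite add0n; apply: eq_count.
Qed.

Lemma L2 : #|[set u : 'I_m.+1 | (u == 0 :> nat) || bit u]| = (count id s).+1.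
Proof.
rewrite (card_ord_pred _ (fun u => (u == 0) || bit u)) /= count_iotaS.
have := count_drop_iota s 0; rewrite drop0 size_s => <-.
by rewrite add1n; congr S; apply: eq_count.
Qed.

Lemma deg_up (S : {set 'I_m.+1}) (x : 'I_m.+1) :
  (forall u, u \in S -> tadj s x u -> x < u) -> deg_in s S x <= count id (drop x s).
Proof.
move=> H; rewrite /deg_in -L1; apply: subset_leq_card; apply/subsetP => u.
rewrite !inE => /andP [uS ad]; have xu := H u uS ad; rewrite xu /=.
by move: ad; rewrite /tadj (maxn_idPr (ltnW xu)) => /andP [].
Qed.


Definition C0 : {set 'I_m.+1} := [set v : 'I_m.+1 | term k s v].

Lemma count_drop0 x : count id (drop x s) <= count id s.
Proof. by have := count_drop_le s (leq0n x); rewrite drop0. Qed.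

Lemma sub_C0 (S : {set 'I_m.+1}) : min_deg_ge k s S -> S \subset C0.
Proof.
move=> /forall_inP md; apply/subsetP => v vS; rewrite inE; apply/negPn/negP.
rewrite /term negb_or negb_and => /andP [h1 h2].
case bv : (bit v).
  have ks : count id s < k by move: h2; rewrite bv /= ltnNge.
  set w := [arg min_(i < v in S) val i].
  have [wS wmin] : w \in S /\ (forall u, u \in S -> w <= u).
    by rewrite /w; case: arg_minnP => // i iS H; split.
  have := md w wS; have := deg_up (x := w) (S := S).
  have Hd : forall u, u \in S -> tadj s w u -> w < u.
    move=> u uS /andP [ne _]; rewrite ltn_neqAle wmin // andbT.
    by apply: contra ne => /eqP e; apply/eqP/val_inj.
  move=> /(_ Hd) h3 h4.
  have := leq_trans h4 (leq_trans h3 (count_drop0 w)); rewrite leqNgt ks //.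
have Hd : forall u, u \in S -> tadj s v u -> v < u.
  move=> u uS /andP [ne b]; rewrite ltnNge; apply/negP => uv.
  by move: b; rewrite (maxn_idPl uv) bv.
have := md v vS; have := deg_up Hd => h3 h4.
have := leq_trans h4 (leq_trans h3 (count_drop_le s (leq_pred v))).
by move=> h; rewrite h in h1.
Qed.


Lemma C0_min : min_deg_ge k s C0.
Proof.
apply/forall_inP => v; rewrite inE /term => vC.
have [hA|hB] : (((v == 0 :> nat) || bit v) && (k <= count id s)) \/
               ((0 < v) && ~~ bit v && (k <= count id (drop v s))).
- case bv : (bit v); case v0 : (v == 0 :> nat) => /=.
  + by left; move: vC; rewrite bv /= (eqP v0) drop0 orbb.
  + by left; move: vC; rewrite bv /= => /orP [h|//]; apply: leq_trans h (count_drop0 _).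
  + by left; move: vC; rewrite bv /= orbF (eqP v0) drop0.
  + right; rewrite lt0n v0 /=; move: vC; rewrite bv /= orbF.
    have vm : v.-1 < size s by rewrite size_s; have := ltn_ord v; case: (val v) v0 => //.
    rewrite (drop_nth false vm) /= bv add0n prednK // lt0n v0 //.
- move/andP: hA => [hv ks].
  set Z := [set u : 'I_m.+1 | (u == 0 :> nat) || bit u].
  have vZ : v \in Z by rewrite inE.
  have cZ : #|Z :\ v| = count id s by have := cardsD1 v Z; rewrite vZ L2 add1n => -[].
  have ks0 := ks; rewrite /deg_in -cZ in ks0; apply: (leq_trans ks0); apply: subset_leq_card.
  apply/subsetP => u; rewrite !inE => /andP [nuv uZ]; apply/andP; split.
    rewrite /term; case/orP: uZ => [/eqP ->|->]; last by rewrite ks orbT.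
    by rewrite drop0 ks.
  rewrite /tadj eq_sym nuv /=.
  case: (leqP u v) => uv.
    case/orP: hv => // /eqP v0.
    by move: nuv; rewrite -val_eqE /=; lia.
  case/orP: uZ => // /eqP u0.
  by rewrite u0 in uv.
- move/andP: hB => [/andP [v0 bv] kd].
  have kd0 := leq_trans kd (count_drop0 v).
  rewrite /deg_in -L1 in kd; apply: (leq_trans kd); apply: subset_leq_card.
  apply/subsetP => u; rewrite !inE => /andP [vu bu]; apply/andP; split.
    by rewrite /term bu /= kd0 orbT.
  rewrite /tadj (maxn_idPr (ltnW vu)) bu andbT.
  by apply/negP => /eqP e; rewrite e ltnn in vu.
Qed.

Lemma kcoreE : kcore k s = C0.
Proof.
apply/eqP; rewrite eqEsubset; apply/andP; split.
  by apply/bigcupsP => S; apply: sub_C0.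
exact: (bigcup_sup _ C0_min).
Qed.

Lemma card_kcore : #|kcore k s| = F k s.
Proof.
rewrite kcoreE /C0 (card_ord_pred _ (term k s)) /F size_s //.
Qed.

End Graph.
Import GRing.Theory Num.Theory.
Local Open Scope ring_scope.

Theorem mainTheorem15 (k n : nat) (hk : (1 <= k)%N) (hn : (1 <= n)%N) :
  prob_kcore_size n k 0 =
    \sum_(0 <= i < k) (1 / 2 : rat) ^+ (n - 1) * ('C(n - 1, i))%:R
  /\
  (forall j : nat, (k + 1 <= j <= n)%N ->
    prob_kcore_size n k j =
      (1 / 2 : rat) ^+ (n + k - j) * ('C(n + k - j - 1, k - 1))%:R).
Proof.
case: n hn => // m _.
have E j : #|[set s : creation_seq m.+1 | #|kcore k s| == j]| = count (fun l => F k l == j) (bs m).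
  rewrite -card_tuple_count; apply: eq_card => s; rewrite !inE card_kcore //.
rewrite /prob_kcore_size /= !subn1 /=; split.
  rewrite E Czero // natr_sum mulr_suml; apply: eq_bigr => i _.
  by rewrite mulrC div1r exprVn natrX.
move=> j /andP [h1 h2].
have [d jd] : exists d, j = (addn k d).+1.
  by exists (subn j k.+1); lia.
subst j.
rewrite E Cj //.
have -> : (m.+1 + k - (k + d).+1 = m - d)%N by lia.
have -> : (m - d).-1 = (m - d - 1)%N by lia.
have -> : (2 ^ m = 2 ^ d * 2 ^ (m - d))%N by rewrite -expnD; congr expn; lia.
rewrite !natrM !natrX div1r exprVn.
have h2n : (2 : rat) != 0 by [].
field.
by rewrite !expf_neq0.
Qed.
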